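(* Let $x\in\mathbb{R}^d$, $V\subseteq\{1,\dots,d\}$ (of any parity), and let $\theta\in\{\pm1\}^d$ with $\theta_i=1$ for $i\in V$ and $\theta_i=-1$ for $i\notin V$. Let $v = \Pi_{\{w\in\mathbb{R}^d:\theta^\top w = |V|-1\}}(x)$ and suppose $v\notin[0,1]^d$. Then there exists $i\in\{1,\dots,d\}$ such that either ($v_i>1$ and $\theta_i=1$) or ($v_i<0$ and $\theta_i=-1$).
   Context: $\Pi_C(x)$ denotes the Euclidean projection of $x$ onto a closed convex set $C$. *)

(* Defs.v *)
From mathcomp Require Import all_boot all_order all_algebra.
From mathcomp Require Import reals.
Set Implicit Arguments. Unset Strict Implicit. Unset Printing Implicit Defensive.
Import Order.TTheory GRing.Theory Num.Theory.
Local Open Scope ring_scope.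

(* Vectors of R^d are row vectors 'rV[R]_d; coordinates indexed by 'I_d
   (index i : 'I_d stands for coordinate i+1 of the paper). *)

Definition sqnorm (R : realType) (d : nat) (u : 'rV[R]_d) : R :=
  \sum_(i < d) u ord0 i ^+ 2.

Definition dotv (R : realType) (d : nat) (u w : 'rV[R]_d) : R :=
  \sum_(i < d) u ord0 i * w ord0 i.

Definition is_proj (R : realType) (d : nat) (C : 'rV[R]_d -> Prop)
  (x p : 'rV[R]_d) : Prop :=
  C p /\ forall w, C w -> sqnorm (x - p) <= sqnorm (x - w).

Definition in_unit_cube (R : realType) (d : nat) (v : 'rV[R]_d) : Prop :=
  forall i : 'I_d, 0 <= v ord0 i <= 1.

(* Main.v *)
Require Import Defs.
From mathcomp Require Import all_boot all_order all_algebra.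
From mathcomp Require Import reals.
From Stdlib Require Import Classical.
Import Order.TTheory GRing.Theory Num.Theory.
Local Open Scope ring_scope.

Theorem theorem3 (R : realType) (d : nat) (x : 'rV[R]_d) (V : {set 'I_d})
  (theta : 'rV[R]_d)
  (htheta : forall i : 'I_d, theta ord0 i = (if i \in V then 1 else -1))
  (v : 'rV[R]_d)
  (hv : is_proj (fun w => dotv theta w = (#|V|%:R - 1)) x v)
  (hnot : ~ in_unit_cube v) :
  exists i : 'I_d,
    (1 < v ord0 i /\ theta ord0 i = 1) \/ (v ord0 i < 0 /\ theta ord0 i = -1).
Proof.
case: hv => hC _.
apply: NNPP => Hn0.
have Hn := not_ex_all_not _ _ Hn0.
have {}Hn : forall i, ~ ((1 < v ord0 i /\ (if i \in V then 1 else -1) = 1 :> R) \/ (v ord0 i < 0 /\ (if i \in V then 1 else -1) = -1 :> R)).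
  by move=> i; rewrite -htheta; apply: Hn.
pose b (i : 'I_d) : R := if i \in V then 1 else 0.
have Hle : forall i, theta ord0 i * v ord0 i <= b i.
  move=> i; rewrite /b htheta.
  have := Hn i; case: (i \in V).
  - by rewrite mul1r => H; rewrite leNgt; apply/negP => H1; apply: H; left; split.
  - by rewrite mulN1r oppr_le0 => H; rewrite leNgt; apply/negP => H1; apply: H; right; split.
have [j Hj] : exists j, theta ord0 j * v ord0 j < b j - 1.
  apply: NNPP => Hall0; have Hall := not_ex_all_not _ _ Hall0; apply: hnot => i.
  have := Hn i; have := Hall i; rewrite /b htheta.
  case: (i \in V).
  - rewrite mul1r subrr => H1 H2; apply/andP; split; rewrite leNgt; apply/negP => H3.
    + by apply: H1.
    + by apply: H2; left; split.
  - rewrite mulN1r sub0r ltrN2 => H1 H2; apply/andP; split; rewrite leNgt; apply/negP => H3.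
    + by apply: H2; right; split.
    + by apply: H1.
have Hcard : #|V|%:R = \sum_i b i :> R.
  rewrite /b -big_mkcond /= -sum1_card natr_sum; apply: eq_bigr => i _; by [].
move: hC; rewrite /dotv Hcard (bigD1 j) //= (bigD1 j (P := xpredT)) //= => E.
have : \sum_(i | i != j) theta ord0 i * v ord0 i <= \sum_(i | i != j) b i.
  by apply: ler_sum => i _; apply: Hle.
move: Hj E; set s1 := \sum_(i | _) _; set s2 := \sum_(i | _) _ => Hj E Hs.
have : theta ord0 j * v ord0 j + s1 < b j + s2 - 1.
  by rewrite addrAC; apply: ltr_leD.
by rewrite E ltxx.
Qed.
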